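(* Let $(E,(\cdot,\cdot),\mathcal H)$ be an extended affine Lie algebra with root system $R$. For $\alpha\in R^\times$ and $\sigma\in R^0$ with $\alpha+\sigma\in R$, we have $\big([E_{\alpha+\sigma},E_{-\alpha}],[E_{-\alpha-\sigma},E_{\alpha}]\big)\neq\{0\}$.
   Context: All Lie algebras are over $\mathbb C$. An extended affine Lie algebra (EALA) is a triple $(E,(\cdot,\cdot),\mathcal H)$ where $E$ is a Lie algebra, $\mathcal H$ a subalgebra and $(\cdot,\cdot)$ a bilinear form on $E$ such that: (EA1) the form is symmetric, non-degenerate and invariant; (EA2) $\mathcal H$ is finite-dimensional, $E=\bigoplus_{\alpha\in\mathcal H^*}E_\alpha$ with $E_\alpha=\{x:[h,x]=\alpha(h)x\ \forall h\in\mathcal H\}$ and $E_0=\mathcal H$; the root system is $R=\{\alpha:E_\alpha\neq0\}$; $t_\alpha\in\mathcal H$ is given by $\alpha(h)=(h,t_\alpha)$, $(\alpha,\beta):=(t_\alpha,t_\beta)$, $R^\times=\{\alpha\in R:(\alpha,\alpha)\neq0\}$, $R^0=R\setminus R^\times$; (EA3) $\mathrm{ad}\,x$ is locally nilpotent for $x\in E_\alpha$, $\alpha\in R^\times$; (EA4) $R$ is discrete in $\mathcal H^*$; (EA5) $R^\times$ is connected (not a union of two nonempty mutually orthogonal subsets) and every isotropic root is non-isolated. Root systems are assumed reduced. *)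

(* Defs.v *)
From HB Require Import structures.
From mathcomp Require Import all_boot all_order all_algebra.
From mathcomp Require Import complex.
From mathcomp Require Import reals.
Set Implicit Arguments. Unset Strict Implicit. Unset Printing Implicit Defensive.
Import Order.TTheory GRing.Theory Num.Theory.
Local Open Scope ring_scope.
Local Open Scope complex_scope.

Section EALA.
Variable R : realType.
Notation C := (R[i]).
Variable E : lmodType C.
Variable br : E -> E -> E.
Variable form : E -> E -> C.
Variable n : nat.                   (* dim H *)
Variable iota : 'rV[C]_n -> E.      (* a linear parametrisation of H *)

Record is_lie : Prop := IsLie {
  br_linl : forall (a : C) x y z, br (a *: x + y) z = a *: br x z + br y z;
  br_linr : forall (a : C) x y z, br z (a *: x + y) = a *: br z x + br z y;
  br_alt : forall x, br x x = 0;
  br_jacobi : forall x y z, br x (br y z) + br y (br z x) + br z (br x y) = 0 }.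

(* H^* is identified with 'rV[C]_n: alpha (iota v) = \sum_i v_i alpha_i *)
Definition pair (v a : 'rV[C]_n) : C := \sum_(i < n) v 0 i * a 0 i.

Definition wsp (a : 'rV[C]_n) (x : E) : Prop :=
  forall v, br (iota v) x = pair v a *: x.

Definition isroot (a : 'rV[C]_n) : Prop := exists2 x, wsp a x & x <> 0.

Definition gram : 'M[C]_n :=
  \matrix_(i, j) form (iota (delta_mx 0 i)) (iota (delta_mx 0 j)).

(* t_alpha = iota (alpha * gram^-1) satisfies alpha(h) = (h, t_alpha);
   hence (alpha, beta) := (t_alpha, t_beta) = alpha gram^-1 beta^T *)
Definition formD (a b : 'rV[C]_n) : C := (a *m invmx gram *m b^T) 0 0.

Definition nonisotropic (a : 'rV[C]_n) : Prop := isroot a /\ formD a a <> 0.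
Definition isotropic (a : 'rV[C]_n) : Prop := isroot a /\ formD a a = 0.

Record is_EALA : Prop := IsEALA {
  ea_lie : is_lie;
  ea_form_linl : forall (a : C) x y z, form (a *: x + y) z = a * form x z + form y z;
  ea_form_sym : forall x y, form x y = form y x;
  ea_form_nondeg : forall x, (forall y, form x y = 0) -> x = 0;
  ea_form_inv : forall x y z, form (br x y) z = form x (br y z);
  (* EA2: H finite-dimensional, iota a linear bijection onto H *)
  ea_iota_lin : forall (a : C) v w, iota (a *: v + w) = a *: iota v + iota w;
  ea_iota_inj : injective iota;
  (* E = (+)_alpha E_alpha (sum of weight spaces spans E; directness is automatic) *)
  ea_decomp : forall x : E, exists (s : seq 'rV[C]_n) (f : 'rV[C]_n -> E),
      (forall a, a \in s -> wsp a (f a)) /\ x = \sum_(a <- s) f a;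
  ea_E0 : forall x, wsp 0 x <-> exists v, x = iota v;
  ea_locnil : forall a x, nonisotropic a -> wsp a x ->
      forall y, exists k, iter k (br x) y = 0;
  ea_discrete : forall a, isroot a -> exists2 eps : C, 0 < eps &
      forall b, isroot b -> (forall i, `|b 0 i - a 0 i| < eps) -> b = a;
  (* EA5: R^x connected *)
  ea_connected : forall A B : 'rV[C]_n -> Prop,
      (forall a, nonisotropic a <-> A a \/ B a) ->
      (exists a, A a) -> (exists b, B b) ->
      ~ (forall a b, A a -> B b -> formD a b = 0);
  ea_nonisolated : forall s, isotropic s ->
      exists a, nonisotropic a /\ isroot (s + a);
  ea_reduced : forall a, nonisotropic a -> ~ isroot (2%:R *: a) }.

Definition brsp (A B : E -> Prop) (u : E) : Prop :=
  exists s : seq (E * E), (forall p, p \in s -> A p.1 /\ B p.2) /\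
    u = \sum_(p <- s) br p.1 p.2.

End EALA.

(* Main.v *)
Require Import Defs.
From HB Require Import structures.
From mathcomp Require Import all_boot all_order all_algebra.
From mathcomp Require Import complex.
From mathcomp Require Import reals.
From mathcomp Require Import ring.
From Stdlib Require Import Classical.
Import Order.TTheory GRing.Theory Num.Theory.
Local Open Scope ring_scope.
Local Open Scope complex_scope.
Set Implicit Arguments. Unset Strict Implicit. Unset Printing Implicit Defensive.

Section Pf.
Variable R : realType.
Local Notation C := (R[i]).
Variable E : lmodType C.
Variable br : E -> E -> E.
Variable form : E -> E -> C.
Variable n : nat.
Variable iota : 'rV[C]_n -> E.
Hypothesis HE : is_EALA br form iota.

Local Notation W := (wsp br iota).

Lemma selfadd (V : zmodType) (x : V) : x = x + x -> x = 0.
Proof. by move/(congr1 (fun t => t - x)); rewrite addrK subrr => /esym. Qed.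

Lemma br0l z : br 0 z = 0.
Proof.
have := br_linl (ea_lie HE) 1 0 0 z; rewrite !scale1r addr0.
exact: selfadd.
Qed.
Lemma br0r z : br z 0 = 0.
Proof.
have := br_linr (ea_lie HE) 1 0 0 z; rewrite !scale1r addr0.
exact: selfadd.
Qed.
Lemma brDl x y z : br (x + y) z = br x z + br y z.
Proof. by have := br_linl (ea_lie HE) 1 x y z; rewrite !scale1r. Qed.
Lemma brDr x y z : br z (x + y) = br z x + br z y.
Proof. by have := br_linr (ea_lie HE) 1 x y z; rewrite !scale1r. Qed.
Lemma brZl a x z : br (a *: x) z = a *: br x z.
Proof. by have := br_linl (ea_lie HE) a x 0 z; rewrite !addr0 br0l addr0. Qed.
Lemma brZr a x z : br z (a *: x) = a *: br z x.
Proof. by have := br_linr (ea_lie HE) a x 0 z; rewrite !addr0 br0r addr0. Qed.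
Lemma brNl x z : br (- x) z = - br x z.
Proof. by rewrite -scaleN1r brZl scaleN1r. Qed.
Lemma brNr x z : br z (- x) = - br z x.
Proof. by rewrite -scaleN1r brZr scaleN1r. Qed.
Lemma brA x y : br x y = - br y x.
Proof.
have := br_alt (ea_lie HE) (x + y).
rewrite !brDl !brDr !(br_alt (ea_lie HE)) add0r addr0 => /eqP.
by rewrite addr_eq0 => /eqP.
Qed.
Lemma jac X Y u : br X (br Y u) - br Y (br X u) = br (br X Y) u.
Proof.
have := br_jacobi (ea_lie HE) X Y u.
rewrite (brA u X) brNr (brA u (br X Y)) => /eqP.
by rewrite addr_eq0 opprK => /eqP.
Qed.

Lemma formDl x y z : form (x + y) z = form x z + form y z.
Proof. by have := ea_form_linl HE 1 x y z; rewrite scale1r mul1r. Qed.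
Lemma form0l z : form 0 z = 0.
Proof.
have := formDl 0 0 z; rewrite addr0.
exact: selfadd.
Qed.
Lemma formZl a x z : form (a *: x) z = a * form x z.
Proof. by have := ea_form_linl HE a x 0 z; rewrite addr0 form0l addr0. Qed.
Lemma formDr x y z : form z (x + y) = form z x + form z y.
Proof. by rewrite !(ea_form_sym HE z) formDl. Qed.
Lemma form0r z : form z 0 = 0.
Proof. by rewrite (ea_form_sym HE) form0l. Qed.
Lemma formZr a x z : form z (a *: x) = a * form z x.
Proof. by rewrite !(ea_form_sym HE z) formZl. Qed.
Lemma formNr x z : form z (- x) = - form z x.
Proof. by rewrite -scaleN1r formZr mulN1r. Qed.
Lemma form_sumr z I (r : seq I) (P : pred I) F :
  form z (\sum_(i <- r | P i) F i) = \sum_(i <- r | P i) form z (F i).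
Proof. exact: (big_morph (form z) (fun x y => formDr x y z) (form0r z)). Qed.
Lemma form_suml z I (r : seq I) (P : pred I) F :
  form (\sum_(i <- r | P i) F i) z = \sum_(i <- r | P i) form (F i) z.
Proof. exact: (big_morph (form^~ z) (fun x y => formDl x y z) (form0l z)). Qed.

Lemma pairD (v a b : 'rV[C]_n) : pair v (a + b) = pair v a + pair v b.
Proof. by rewrite /pair -big_split; apply: eq_bigr => i _; rewrite mxE mulrDr. Qed.
Lemma pairN (v a : 'rV[C]_n) : pair v (- a) = - pair v a.
Proof. by rewrite /pair -sumrN; apply: eq_bigr => i _; rewrite mxE mulrN. Qed.
Lemma pairMn (v a : 'rV[C]_n) k : pair v (a *+ k) = pair v a *+ k.
Proof. elim: k => [|k IH]; first by rewrite !mulr0n /pair big1 // => i _; rewrite mxE mulr0.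
by rewrite !mulrS pairD IH. Qed.
Lemma pair_delta (i : 'I_n) (a : 'rV[C]_n) : pair (delta_mx 0 i) a = a 0 i.
Proof.
rewrite /pair (bigD1 i) //= big1 ?addr0; first by rewrite mxE !eqxx mul1r.
by move=> j /negPf ji; rewrite mxE ji andbF mul0r.
Qed.

Lemma wsp0 a : W a 0.
Proof. by move=> v; rewrite br0r scaler0. Qed.

Lemma wsp_br a b x y : W a x -> W b y -> W (a + b) (br x y).
Proof.
move=> Hx Hy v.
have := jac (iota v) x y; rewrite Hx Hy brZl brZr => /eqP.
rewrite subr_eq => /eqP ->.
by rewrite pairD scalerDl addrC.
Qed.

Lemma wsp_iter b g z Y : W b z -> W g Y -> forall k, W (b + g *+ k) (iter k (br Y) z).
Proof.
move=> Hz HY; elim=> [|k IH]; first by rewrite mulr0n addr0.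
have -> : b + g *+ k.+1 = g + (b + g *+ k) by rewrite mulrS addrCA.
exact: wsp_br.
Qed.

Lemma formNl x z : form (- x) z = - form x z.
Proof. by rewrite -scaleN1r formZl mulN1r. Qed.

Lemma orth a b x y : W a x -> W b y -> a + b != 0 -> form x y = 0.
Proof.
move=> Hx Hy nz.
have [i Hi] : exists i, (a + b) 0 i != 0.
  apply: NNPP => H; move/negP: nz; apply; apply/eqP/rowP => i; rewrite [RHS]mxE.
  by apply/eqP; apply: NNPP => Hn; apply: H; exists i; apply/negP.
have := ea_form_inv HE x (iota (delta_mx 0 i)) y.
rewrite brA Hx Hy formNl formZl formZr => /eqP.
rewrite eq_sym -addr_eq0 addrC -mulrDl -pairD pair_delta mulf_eq0 (negPf Hi) /=.
by move/eqP.
Qed.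

Lemma pair_ex b x : W b x -> x != 0 -> exists2 y, W (- b) y & form x y != 0.
Proof.
move=> Hx nx; apply: NNPP => H.
move/negP: nx; apply; apply/eqP; apply: (ea_form_nondeg HE) => y.
have [s [f [Hf ->]]] := ea_decomp HE y.
rewrite form_sumr big_seq big1 // => c cs.
have Hc := Hf c cs.
have [ceq|ne] := eqVneq c (- b).
  rewrite ceq in Hc *; apply: NNPP => Hn; apply: H; exists (f (- b)) => //; by apply/eqP.
apply: (orth Hx Hc); by rewrite addrC addr_eq0.
Qed.

Lemma nondeg2 b w : W b w -> (forall y, W (- b) y -> form y w = 0) -> w = 0.
Proof.
move=> Hw H; apply: NNPP => nw.
have [y Hy ny] := pair_ex Hw (introN eqP nw).
by move/eqP: ny; apply; rewrite (ea_form_sym HE) H.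
Qed.

Lemma iota0 : iota 0 = 0.
Proof. have := ea_iota_lin HE 1 0 0; rewrite !scale1r addr0; exact: selfadd. Qed.
Lemma iotaD v w : iota (v + w) = iota v + iota w.
Proof. by have := ea_iota_lin HE 1 v w; rewrite !scale1r. Qed.
Lemma iotaZ a v : iota (a *: v) = a *: iota v.
Proof. by have := ea_iota_lin HE a v 0; rewrite !addr0 iota0 addr0. Qed.
Lemma iota_coord v : iota v = \sum_(i < n) v 0 i *: iota (delta_mx 0 i).
Proof.
rewrite {1}(row_sum_delta v) (big_morph iota iotaD iota0).
by apply: eq_bigr => i _; exact: iotaZ.
Qed.

Lemma kill (u : 'rV[C]_n) : u *m gram form iota = 0 -> u = 0.
Proof.
move=> Hu.
have Hj : forall j, form (iota u) (iota (delta_mx 0 j : 'rV[C]_n)) = 0.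
  move=> j; rewrite (iota_coord u) form_suml.
  have := congr1 (fun M : 'M[C]_(1, n) => M 0 j) Hu; rewrite mxE [RHS]mxE => E0; rewrite -[RHS]E0.
  by apply: eq_bigr => k _; rewrite formZl mxE.
have Hz : iota u = 0.
  apply: (ea_form_nondeg HE) => y.
  have [s [f [Hf ->]]] := ea_decomp HE y.
  rewrite form_sumr big_seq big1 // => c cs.
  have Hc := Hf c cs.
  have [ceq|ne] := eqVneq c 0.
    rewrite ceq in Hc *; have [v ->] := (proj1 (ea_E0 HE _)) Hc.
    rewrite (iota_coord v) form_sumr big1 // => k _.
    by rewrite formZr Hj mulr0.
  apply: (orth (a := 0) _ Hc); first by apply/(ea_E0 HE); exists u.
  by rewrite add0r.
by apply: (ea_iota_inj HE); rewrite Hz iota0.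
Qed.

Lemma gram_unit : gram form iota \in unitmx.
Proof.
rewrite -row_free_unit -kermx_eq0; apply/eqP/row_matrixP => i; rewrite row0.
apply: kill; apply/sub_kermxP; exact: row_sub.
Qed.

Lemma gram_rel (w a : 'rV[C]_n) K :
  (forall v, form (iota v) (iota w) = pair v a * K) ->
  pair w a = K * Defs.formD form iota a a.
Proof.
move=> H.
have G1 : gram form iota *m w^T = K *: a^T.
  apply/matrixP => i j; rewrite (ord1 j) !mxE.
  have := H (delta_mx 0 i); rewrite pair_delta mulrC => <-.
  rewrite (iota_coord w) form_sumr; apply: eq_bigr => k _.
  by rewrite formZr !mxE mulrC.
have wT := congr1 (mulmx (invmx (gram form iota))) G1.
rewrite mulKmx ?gram_unit // in wT.
have -> : pair w a = (a *m w^T) 0 0.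
  by rewrite /pair mxE; apply: eq_bigr => i _; rewrite mxE mulrC.
by rewrite wT -!scalemxAr mxE mulmxA.
Qed.

Lemma iter_min (g : E -> E) z k : z != 0 -> iter k g z = 0 ->
  exists N, iter N.+1 g z = 0 /\ iter N g z != 0.
Proof.
move=> nz; elim: k => [|k IH] /=; first by move=> z0; rewrite z0 eqxx in nz.
move=> Hk; have [H0|Hn] := eqVneq (iter k g z) 0; first exact: IH.
by exists k.
Qed.

Lemma Sl (X Y : E) (H : E -> E) (z : E) (mu c : C) :
  (forall u, br X (br Y u) - br Y (br X u) = H u) ->
  (forall k, H (iter k (br Y) z) = (mu - k%:R * c) *: iter k (br Y) z) ->
  br Y (br X z) = 0 ->
  forall k, br X (iter k.+1 (br Y) z) = (k.+1%:R * (mu - k%:R * c / 2)) *: iter k (br Y) z.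
Proof.
move=> HJ HH H0; elim=> [|k IH].
  have := HJ z; rewrite H0 subr0 => /= ->.
  have := HH 0%N; rewrite /= => ->.
  by rewrite !mul0r !subr0 mul1r.
have := HJ (iter k.+1 (br Y) z); move/eqP; rewrite subr_eq => /eqP /= ->.
rewrite IH brZr; have := HH k.+1 => /= ->; rewrite -scalerDl; congr (_ *: _).
by field.
Qed.

Lemma Tl (X Y : E) (H : E -> E) (z : E) (mu c : C) :
  (forall u, br X (br Y u) - br Y (br X u) = H u) ->
  (forall k, H (iter k (br Y) z) = (mu - k%:R * c) *: iter k (br Y) z) ->
  br Y (br X z) = 0 -> z != 0 -> (exists k, iter k (br Y) z = 0) ->
  exists N : nat, mu = N%:R * c / 2.
Proof.
move=> HJ HH H0 nz [k Hk].
have [N [HN1 HN]] := iter_min nz Hk.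
have := Sl HJ HH H0 N; rewrite HN1 br0r => /esym/eqP.
rewrite scaler_eq0 (negPf HN) orbF mulf_eq0 pnatr_eq0 /= subr_eq0 => /eqP ->.
by exists N.
Qed.

Lemma mainl a s : nonisotropic br form iota a -> isroot br iota s -> isroot br iota (a + s) ->
  exists u v, brsp br (W (a + s)) (W (- a)) u /\
    brsp br (W (- a - s)) (W a) v /\ form u v <> 0.
Proof.
move=> Ha; case: (Ha) => [[e He ne] Hca] [z Hz nz] [x0 Hx0 nx0].
have [f Hf Kne] := pair_ex He (introN eqP ne).
have [w Hw] : exists w, br e f = iota w.
  apply/(ea_E0 HE); rewrite -(addrN a); exact: wsp_br.
set c := pair w a.
have Hc : c != 0.
  rewrite /c (@gram_rel w a (form e f)).
    by rewrite mulf_eq0 negb_or Kne; apply/eqP.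
  by move=> v; rewrite -Hw -(ea_form_inv HE) He formZl.
have Hnf : nonisotropic br form iota (- a).
  split; first by exists f => // f0; move: Kne; rewrite f0 form0r eqxx.
  by rewrite /Defs.formD linearN /= mulmxN !mulNmx opprK.
apply: NNPP => Hno.
have E1 : forall x, W (a + s) x -> br e (br f x) = 0.
  move=> x Hx; apply: (@nondeg2 (a + s)).
    have -> : a + s = a + (- a + (a + s)) by rewrite addKr.
    exact: wsp_br He (wsp_br Hf Hx).
  move=> y Hy; apply: NNPP => Hne; apply: Hno.
  exists (br x f), (br y e); split; [|split].
  - exists [:: (x, f)]; split; last by rewrite big_cons big_nil addr0.
    by move=> p; rewrite inE => /eqP ->; split.
  - exists [:: (y, e)]; split; last by rewrite big_cons big_nil addr0.
    by move=> p; rewrite inE => /eqP ->; split => //=; rewrite -opprD.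
  - rewrite (ea_form_sym HE) (ea_form_inv HE) (brA x f) brNr formNr.
    move=> /eqP; rewrite oppr_eq0 => /eqP; exact: Hne.
have A : forall y, W s y -> y != 0 -> br f (br e y) = 0 ->
    exists N : nat, pair w s = N%:R * c / 2.
  move=> y Hy ny H0.
  apply: (@Tl e f (br (iota w)) y (pair w s) c _ _ H0 ny).
  - by move=> u; rewrite jac Hw.
  - move=> k; rewrite (wsp_iter Hy Hf k) pairD pairMn pairN; congr (_ *: _).
    by rewrite mulNrn mulr_natl.
  - exact: (ea_locnil HE Hnf Hf y).
have B : forall x, W (a + s) x -> x != 0 -> br e (br f x) = 0 ->
    exists M : nat, - pair w (a + s) = M%:R * c / 2.
  move=> x Hx nx H0.
  apply: (@Tl f e (fun u => - br (iota w) u) x (- pair w (a + s)) c _ _ H0 nx).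
  - by move=> u /=; rewrite -Hw -jac opprB.
  - move=> k /=; rewrite (wsp_iter Hx He k) -scaleNr pairD pairMn; congr (_ *: _).
    by rewrite opprD mulr_natl.
  - exact: (ea_locnil HE Ha He x).
have contra : forall N M : nat, pair w s = N%:R * c / 2 ->
    - pair w (a + s) = M%:R * c / 2 -> False.
  move=> N M HA HB; rewrite pairD -/c in HB.
  have H2 : c * (N%:R + M%:R + 2) = 0.
    have -> : c * (N%:R + M%:R + 2) = 2 * (N%:R * c / 2) + 2 * (M%:R * c / 2) + 2 * c.
      by field.
    rewrite -HA -HB; ring.
  have : (N%:R + M%:R + 2 : C) = (N + M + 2)%N%:R by rewrite !natrD.
  move: H2 => /eqP; rewrite mulf_eq0 (negPf Hc) /= => /eqP -> /eqP.
  by rewrite eq_sym pnatr_eq0 addn2.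
have Claim : forall x, W (a + s) x -> br f x = 0.
  move=> x Hx; apply: NNPP => Hfx.
  have nx : x != 0 by apply/eqP => x00; apply: Hfx; rewrite x00 br0r.
  have Hy : W s (br f x) by rewrite -(addKr a s); exact: wsp_br Hf Hx.
  have H0 : br f (br e (br f x)) = 0 by rewrite (E1 _ Hx) br0r.
  have [N HN] := A _ Hy (introN eqP Hfx) H0.
  have [M HM] := B _ Hx nx (E1 _ Hx).
  exact: contra HN HM.
have Hez : W (a + s) (br e z) by exact: wsp_br.
have [N HN] := A _ Hz (introN eqP nz) (Claim _ Hez).
have [M HM] := B _ Hx0 (introN eqP nx0) (E1 _ Hx0).
exact: contra HN HM.
Qed.

End Pf.
Unset Implicit Arguments.

Theorem lemma2p8 (R : realType) (E : lmodType R[i]) (br : E -> E -> E)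
  (form : E -> E -> R[i]) (n : nat) (iota : 'rV[R[i]]_n -> E)
  (HE : is_EALA br form iota) (a s : 'rV[R[i]]_n) :
  nonisotropic br form iota a -> isotropic br form iota s ->
  isroot br iota (a + s) ->
  exists u v,
    brsp br (wsp br iota (a + s)) (wsp br iota (- a)) u /\
    brsp br (wsp br iota (- a - s)) (wsp br iota a) v /\
    form u v <> 0.
Proof. by move=> Ha [Hs _]; exact: mainl. Qed.
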